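(* Let $G$ be a nice connected graph of size $m$, and let $W$ be a closed walk of $G$ of length $p$ going through all vertices of $G$. Then ${\rm ML}^{\rm W}(G) \leq p+2m$.
   Context: All graphs are finite and simple. A walk of a graph $G$ is a sequence of vertices $u_0u_1\dots u_p$ with $u_tu_{t+1}\in E(G)$ for all $t$ (vertices and edges may repeat); its length is $p$; it is closed if $u_0=u_p$. For a walk $W$ of $G$, $G+W$ is the multigraph on $V(G)$ whose edge multiset consists of $E(G)$ together with each edge added as many times as $W$ traverses it. A multigraph is locally irregular if no two adjacent vertices have the same degree; a walk $W$ is irregularising if $G+W$ is locally irregular. A graph is nice if it is connected and not isomorphic to $K_2$. ${\rm ML}^{\rm W}(G)$ denotes the minimum length of an irregularising walk of $G$ (a walk of length $0$ is allowed). *)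

(* Defs.v *)
From mathcomp Require Import all_boot.
Set Implicit Arguments. Unset Strict Implicit. Unset Printing Implicit Defensive.

Definition simple_graph (T : finType) (e : rel T) : Prop :=
  symmetric e /\ irreflexive e.

(* number of edges (size) : each unordered edge appears twice as an ordered pair *)
Definition nedges (T : finType) (e : rel T) : nat :=
  #|[set x : T * T | e x.1 x.2]| %/ 2.

Definition connected_graph (T : finType) (e : rel T) : Prop :=
  forall x y : T, connect e x y.

Definition isK2 (T : finType) (e : rel T) : Prop :=
  #|T| = 2 /\ exists x y : T, e x y.

Definition nice (T : finType) (e : rel T) : Prop :=
  connected_graph e /\ ~ isK2 e.

(* A walk u0 u1 ... up is represented by its start u0 and the sequence
   s = [:: u1; ...; up]; it is a walk iff path e u0 s; its length is size s. *)
Definition is_walk (T : finType) (e : rel T) (u0 : T) (s : seq T) : bool :=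
  path e u0 s.

Definition walk_length (T : finType) (u0 : T) (s : seq T) : nat := size s.

Definition closed_walk (T : finType) (u0 : T) (s : seq T) : bool :=
  last u0 s == u0.

Definition covers_all (T : finType) (u0 : T) (s : seq T) : Prop :=
  forall v : T, v \in u0 :: s.

Definition walk_steps (T : finType) (u0 : T) (s : seq T) : seq (T * T) :=
  zip (u0 :: s) s.

Definition deg (T : finType) (e : rel T) (v : T) : nat := #|[set u | e v u]|.

(* degree of v in the multigraph G + W: deg_G v plus the number of
   traversals by W of edges incident to v (no loops since G is simple) *)
Definition deg_plus (T : finType) (e : rel T) (u0 : T) (s : seq T) (v : T) : nat :=
  deg e v + count (fun pr : T * T => (pr.1 == v) || (pr.2 == v)) (walk_steps u0 s).

(* G + W is locally irregular. Adjacency in G + W coincides with adjacency in G,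
   since W only traverses edges of G. *)
Definition irregularising (T : finType) (e : rel T) (u0 : T) (s : seq T) : Prop :=
  is_walk e u0 s /\
  forall x y : T, e x y -> deg_plus e u0 s x <> deg_plus e u0 s y.

Definition MLW_le (T : finType) (e : rel T) (k : nat) : Prop :=
  exists (u0 : T) (s : seq T), irregularising e u0 s /\ walk_length u0 s <= k.

(* Main.v *)
Require Import Defs.
From mathcomp Require Import all_boot zify.
Set Implicit Arguments. Unset Strict Implicit. Unset Printing Implicit Defensive.

Lemma count_inj (f : nat -> nat) (F s : seq nat) :
  injective f -> uniq s -> count (fun k => f k \in F) s <= size F.
Proof.
move=> finj us; rewrite -size_filter -(size_map f).
apply: uniq_leq_size; first by rewrite map_inj_uniq // filter_uniq.
by move=> y /mapP [k Hk ->]; move: Hk; rewrite mem_filter => /andP [H _].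
Qed.

Lemma avoid2 (a b : nat) (F1 F2 : seq nat) :
  exists k, [/\ k <= size F1 + size F2, a + 2 * k \notin F1 & b + 2 * k \notin F2].
Proof.
set N := (size F1 + size F2).+1.
case: (boolP (has (fun k => (a + 2 * k \notin F1) && (b + 2 * k \notin F2)) (iota 0 N))).
  move/hasP => [k]; rewrite mem_iota add0n => /andP [_ kN] /andP [h1 h2].
  by exists k; split.
rewrite has_count -leqNgt leqn0 => /eqP H0.
have := count_predC (fun k => (a + 2 * k \notin F1) && (b + 2 * k \notin F2)) (iota 0 N).
rewrite H0 add0n size_iota => HC.
have HU := count_predUI (fun k => a + 2 * k \in F1) (fun k => b + 2 * k \in F2) (iota 0 N).
have E : count (predC (fun k => (a + 2 * k \notin F1) && (b + 2 * k \notin F2))) (iota 0 N)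
   = count (predU (fun k => a + 2 * k \in F1) (fun k => b + 2 * k \in F2)) (iota 0 N).
  by apply: eq_count => k /=; rewrite negb_and !negbK.
have c1 := @count_inj (fun k => a + 2 * k) F1 (iota 0 N) ltac:(move=> x y /= ?; lia) (iota_uniq 0 N).
have c2 := @count_inj (fun k => b + 2 * k) F2 (iota 0 N) ltac:(move=> x y /= ?; lia) (iota_uniq 0 N).
rewrite /N in HC HU E c1 c2. lia.
Qed.

Lemma steps_cat (T : finType) (u0 : T) (s1 s2 : seq T) :
  walk_steps u0 (s1 ++ s2) = walk_steps u0 s1 ++ walk_steps (last u0 s1) s2.
Proof. by elim: s1 u0 => //= x s1 IH u0; rewrite /walk_steps /= -IH. Qed.

Lemma insert1 (T : finType) (e : rel T) (u0 : T) (s : seq T) (x : T) (c : seq T) :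
  x \in u0 :: s -> last x c = x -> path e x c -> path e u0 s ->
  exists s', [/\ path e u0 s', size s' = size s + size c,
     {subset u0 :: s <= u0 :: s'} &
     forall P, count P (walk_steps u0 s') = count P (walk_steps u0 s) + count P (walk_steps x c)].
Proof.
case/splitPl => p1 p2 Hl Hc pc.
rewrite cat_path Hl => /andP [h1 h2].
exists (p1 ++ c ++ p2); split.
- by rewrite cat_path Hl h1 cat_path pc Hc h2.
- by rewrite !size_cat; lia.
- move=> v; rewrite !inE !mem_cat => /orP [->//|/orP [->|->]]; rewrite ?orbT //.
- by move=> P; rewrite !steps_cat Hl Hc !count_cat; lia.
Qed.

Lemma insert_rep (T : finType) (e : rel T) (u0 : T) (s : seq T) (x : T) (c : seq T) (k : nat) :
  x \in u0 :: s -> last x c = x -> path e x c -> path e u0 s ->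
  exists s', [/\ path e u0 s', size s' = size s + k * size c,
     {subset u0 :: s <= u0 :: s'} &
     forall P, count P (walk_steps u0 s') = count P (walk_steps u0 s) + k * count P (walk_steps x c)].
Proof.
move=> xin Hl pc ps; elim: k => [|k [s1 [p1 z1 sub1 c1]]].
  by exists s; split => // [|P]; rewrite mul0n addn0.
have [s2 [p2 z2 sub2 c2]] := insert1 (sub1 _ xin) Hl pc p1.
exists s2; split => //.
- by rewrite z2 z1 mulSn; lia.
- by move=> v /sub1 /sub2.
- by move=> P; rewrite c2 c1 mulSn; lia.
Qed.

Lemma insert_all (T : finType) (e : rel T) (u0 : T) (s : seq T) (c : T -> seq T) (K : T -> nat)
  (vs : seq T) :
  (forall v, v \in u0 :: s) -> (forall v, last v (c v) = v) -> (forall v, path e v (c v)) ->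
  path e u0 s ->
  exists s', [/\ path e u0 s', size s' = size s + \sum_(v <- vs) K v * size (c v),
     (forall v, v \in u0 :: s') &
     forall P, count P (walk_steps u0 s') = count P (walk_steps u0 s) +
        \sum_(v <- vs) K v * count P (walk_steps v (c v))].
Proof.
move=> cov Hl pc ps; elim: vs => [|v vs [s1 [p1 z1 cov1 c1]]].
  by exists s; split => // [|P]; rewrite big_nil addn0.
have [s2 [p2 z2 sub2 c2]] := insert_rep (K v) (cov1 v) (Hl v) (pc v) p1.
exists s2; split => //.
- by rewrite z2 z1 big_cons; lia.
- by move=> y; apply: sub2.
- by move=> P; rewrite c2 c1 big_cons; lia.
Qed.

Definition Dv (T : finType) (p : T -> T) (base K : T -> nat) (x : T) : nat :=
  base x + \sum_(y : T) K y * (2 * (y == x) + 2 * (p y == x)).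

Definition upd (T : finType) (K : T -> nat) (v : T) (k : nat) : T -> nat :=
  fun y => if y == v then k else K y.

Lemma D_upd (T : finType) (p : T -> T) (base K : T -> nat) v k x :
  K v = 0 -> Dv p base (upd K v k) x = Dv p base K x + k * (2 * (v == x) + 2 * (p v == x)).
Proof.
move=> Kv; rewrite /Dv (bigD1 v) //= [in RHS](bigD1 v) //= /upd eqxx Kv mul0n add0n.
rewrite (eq_bigr (fun y => K y * (2 * (y == x) + 2 * (p y == x)))); first by lia.
by move=> y /negbTE ->.
Qed.

Lemma D_upd_same (T : finType) (p : T -> T) (base K : T -> nat) v k :
  K v = 0 -> p v != v -> Dv p base (upd K v k) v = Dv p base K v + 2 * k.
Proof. by move=> Kv pv; rewrite D_upd // eqxx (negbTE pv); lia. Qed.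

Lemma D_upd_other (T : finType) (p : T -> T) (base K : T -> nat) v k x :
  K v = 0 -> v != x -> p v != x -> Dv p base (upd K v k) x = Dv p base K x.
Proof. by move=> Kv h1 h2; rewrite D_upd // (negbTE h1) (negbTE h2); lia. Qed.

Lemma phase1 (T : finType) (e : rel T) (key : T -> nat) (p : T -> T) (base : T -> nat) (w : T) :
  symmetric e -> irreflexive e -> injective key ->
  (forall v, key v < key w -> key v < key (p v)) ->
  forall t, t <= key w -> exists K : T -> nat,
   [/\ forall v, t <= key v -> K v = 0,
       forall v, K v <= #|[set x | e v x & key x < key v]| &
       forall x y, e x y -> key x < t -> key y < t -> Dv p base K x != Dv p base K y].
Proof.
move=> esym eirr kinj kp; elim => [_|t IH Ht].
  by exists (fun _ => 0); split.
have [K [HK0 HKb HKd]] := IH (ltnW Ht).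
case: (pickP (fun v => key v == t)) => [v /eqP Hv | Hnone]; last first.
  exists K; split => //.
  - by move=> v Hv; apply: HK0; apply: ltnW.
  - move=> x y exy hx hy; apply: HKd => //.
    + by move: hx (Hnone x); rewrite ltnS leq_eqVlt => /orP [/eqP ->|//] /=; rewrite eqxx.
    + by move: hy (Hnone y); rewrite ltnS leq_eqVlt => /orP [/eqP ->|//] /=; rewrite eqxx.
set A := [set x | e v x & key x < key v].
set F := [seq Dv p base K x | x <- enum A].
have [k [kle kF _]] := avoid2 (Dv p base K v) 0 F [::].
rewrite addn0 /F size_map -cardE in kle.
have Kv : K v = 0 by apply: HK0; rewrite Hv.
have kpv : key v < key (p v) by apply: kp; rewrite Hv.
have pvv : p v != v by apply/eqP => h; rewrite h ltnn in kpv.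
have Dold : forall x, key x < t -> Dv p base (upd K v k) x = Dv p base K x.
  move=> x hx; apply: D_upd_other => //.
    by apply/eqP => h; rewrite -h Hv ltnn in hx.
  by apply/eqP => h; move: hx; rewrite -h -Hv => hx; move: (ltn_trans kpv hx); rewrite ltnn.
have Dnew := D_upd_same base k Kv pvv.
have claim : forall y, e v y -> key y < t ->
    Dv p base (upd K v k) v != Dv p base (upd K v k) y.
  move=> y evy hy; rewrite Dnew Dold //; apply/eqP => h; move: kF; rewrite h.
  by rewrite /F; move/negP; apply; apply: map_f; rewrite mem_enum inE evy Hv.
exists (upd K v k); split.
- move=> y hy; rewrite /upd; case: eqP => [ey|_]; first by rewrite ey Hv ltnn in hy.
  by apply: HK0; apply: ltnW.
- move=> y; rewrite /upd; case: eqP => [->|_]; [exact: kle | exact: HKb].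
- move=> x y exy hx' hy'.
  have [hx|hx] : key x = t \/ key x < t by lia.
  all: have [hy|hy] : key y = t \/ key y < t by lia.
  + have xy : x = y by apply: kinj; rewrite hx hy.
    by rewrite xy eirr in exy.
  + have xv : x = v by apply: kinj; rewrite hx Hv.
    by rewrite xv; apply: claim => //; rewrite -xv.
  + have yv : y = v by apply: kinj; rewrite hy Hv.
    by rewrite yv eq_sym; apply: claim => //; rewrite -yv esym.
  + by rewrite !Dold //; apply: HKd.
Qed.

Lemma sum_ind (T : finType) (u : T) (c : nat) : \sum_(v : T) ((v == u) * c) = c.
Proof.
by rewrite (bigD1 u) //= eqxx mul1n big1 ?addn0 // => v /negbTE ->.
Qed.

Lemma greedy (T : finType) (e : rel T) (key : T -> nat) (p : T -> T) (base : T -> nat) (w u r : T) :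
  symmetric e -> irreflexive e -> injective key ->
  (forall v, v != r -> key v < key (p v)) ->
  p w = u -> p u = r -> e u r ->
  key w < key u -> key u < key r ->
  (forall v, v != w -> v != u -> v != r -> key v < key w) ->
  exists K : T -> nat, [/\ K r = 0,
     \sum_v K v <= \sum_v #|[set x | e v x & key x < key v]| &
     forall x y, e x y -> Dv p base K x != Dv p base K y].
Proof.
move=> esym eirr kinj kp pw pu eur kwu kur kord.
have neq : forall a c, key a < key c -> a != c.
  by move=> a c h; apply/eqP => ac; rewrite ac ltnn in h.
have wu := neq _ _ kwu; have ur := neq _ _ kur; have wr := neq _ _ (ltn_trans kwu kur).
have uw : u != w by rewrite eq_sym.
have ru : r != u by rewrite eq_sym.
have rw : r != w by rewrite eq_sym.
have lt_r : forall v, v != r -> key v < key r.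
  move=> v vr; case: (eqVneq v u) => [->//|vu]; case: (eqVneq v w) => [->|vw].
    exact: ltn_trans kwu kur.
  exact: ltn_trans (kord _ vw vu vr) (ltn_trans kwu kur).
have le_w : forall v, v != u -> v != r -> key v <= key w.
  move=> v vu vr; case: (eqVneq v w) => [->//|vw]; exact: ltnW (kord _ vw vu vr).
have lt_u : forall v, v != u -> v != r -> key v < key u.
  by move=> v vu vr; exact: leq_ltn_trans (le_w _ vu vr) kwu.
have kp1 : forall v, key v < key w -> key v < key (p v).
  move=> v hv; apply: kp; apply: neq; exact: ltn_trans hv (ltn_trans kwu kur).
have [K [HK0 HKb HKd]] := phase1 base esym eirr kinj kp1 (leqnn (key w)).
have Kw : K w = 0 by apply: HK0.
have Ku : K u = 0 by apply: HK0; exact: ltnW.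
have Kr : K r = 0 by apply: HK0; exact: ltnW (ltn_trans kwu kur).
set Aw := [set x | e w x & key x < key w].
set Fw := [seq Dv p base K x | x <- enum Aw].
have [k [kle kF kR]] := avoid2 (Dv p base K w) (Dv p base K u) Fw [:: Dv p base K r].
rewrite /Fw size_map -cardE /= in kle.
rewrite mem_seq1 in kR.
set K1 := upd K w k.
have pww : p w != w by rewrite pw eq_sym.
have D1w : Dv p base K1 w = Dv p base K w + 2 * k by apply: D_upd_same.
have D1u : Dv p base K1 u = Dv p base K u + 2 * k.
  by rewrite /K1 D_upd // (negbTE wu) pw eqxx; clear; lia.
have D1o : forall x, x != w -> x != u -> Dv p base K1 x = Dv p base K x.
  by move=> x xw xu; apply: D_upd_other => //; rewrite ?pw eq_sym.
have D1r : Dv p base K1 r = Dv p base K r by apply: D1o; rewrite eq_sym.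
have P2a : forall x y, e x y -> key x <= key w -> key y <= key w ->
    Dv p base K1 x != Dv p base K1 y.
  have side : forall y, e w y -> key y < key w -> Dv p base K1 w != Dv p base K1 y.
    move=> y ewy hy; rewrite D1w D1o; first last.
    - by apply: neq; exact: ltn_trans hy kwu.
    - exact: neq.
    apply/eqP => h; move: kF; rewrite h; move/negP; apply.
    by apply: map_f; rewrite mem_enum inE ewy.
  move=> x y exy hx hy.
  move: hx hy; rewrite leq_eqVlt => /orP [/eqP xw|xw]; rewrite leq_eqVlt => /orP [/eqP yw|yw].
  - by move: exy; rewrite (kinj _ _ xw) (kinj _ _ yw) eirr.
  - by rewrite (kinj _ _ xw); apply: side => //; rewrite -(kinj _ _ xw).
  - by rewrite (kinj _ _ yw) eq_sym; apply: side => //; rewrite -(kinj _ _ yw) esym.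
  - rewrite !D1o; try (apply: neq => //; exact: ltn_trans kwu).
    exact: HKd.
have P2b : Dv p base K1 u != Dv p base K1 r by rewrite D1u D1r.
set Au := [set x | e u x & key x < key u].
set Ar := [set x | e r x & key x < key r] :\ u.
set Fu := [seq Dv p base K1 x | x <- enum Au].
set Fr := [seq Dv p base K1 x | x <- enum Ar].
have [k2 [k2le k2F k2R]] := avoid2 (Dv p base K1 u) (Dv p base K1 r) Fu Fr.
rewrite /Fu /Fr !size_map -!cardE in k2le.
have cardr : #|[set x | e r x & key x < key r]| = 1 + #|Ar|.
  by rewrite (cardsD1 u) inE esym eur kur.
have K1u : K1 u = 0 by rewrite /K1 /upd (negbTE uw).
have puu : p u != u by rewrite pu eq_sym.
set K2 := upd K1 u k2.
have D2u : Dv p base K2 u = Dv p base K1 u + 2 * k2 by apply: D_upd_same.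
have D2r : Dv p base K2 r = Dv p base K1 r + 2 * k2.
  by rewrite /K2 D_upd // (negbTE ur) pu eqxx; clear; lia.
have D2o : forall x, x != u -> x != r -> Dv p base K2 x = Dv p base K1 x.
  by move=> x xu xr; apply: D_upd_other => //; rewrite ?pu eq_sym.
have K2r : K2 r = 0 by rewrite /K2 /K1 /upd (negbTE ru) (negbTE rw).
have K2u : K2 u = k2 by rewrite /K2 /upd eqxx.
have K2w : K2 w = k by rewrite /K2 /K1 /upd (negbTE wu) eqxx.
have K2o : forall v, v != u -> v != w -> K2 v = K v.
  by move=> v vu vw; rewrite /K2 /K1 /upd (negbTE vu) (negbTE vw).
exists K2; split.
- exact: K2r.
- set b := fun v => #|[set x | e v x & key x < key v]|.
  have pt : forall v, K2 v + (v == u) * 1 + (v == r) * b r <= b v + (v == w) * 1 + (v == u) * b r.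
    move=> v.
    case: (eqVneq v u) => [->|vu].
      rewrite K2u (negbTE ur) (negbTE uw) /b cardr /= -/Au; clear -k2le; lia.
    case: (eqVneq v r) => [->|vr].
      rewrite K2r (negbTE rw); clear; lia.
    case: (eqVneq v w) => [->|vw].
      rewrite K2w /b -/Aw; clear -kle; lia.
    rewrite K2o // /b; have := HKb v; clear; lia.
  have : \sum_v (K2 v + (v == u) * 1 + (v == r) * b r) <= \sum_v (b v + (v == w) * 1 + (v == u) * b r).
    by apply: leq_sum => v _; exact: pt v.
  rewrite !big_split /= !sum_ind /b /=; clear; lia.
- have H : forall x y, e x y -> (x == u) || (x == r) -> Dv p base K2 x != Dv p base K2 y.
    move=> x y exy /orP [/eqP xu|/eqP xr].
    + case: (eqVneq y r) => [yr|yr].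
        by rewrite xu yr D2u D2r eqn_add2r.
      have yu : y != u by apply/eqP => yu; rewrite xu yu eirr in exy.
      rewrite xu D2u D2o //; apply/eqP => h; move: k2F; rewrite h; move/negP; apply.
      have exu : e u y by rewrite -xu.
      by apply: map_f; rewrite mem_enum inE exu (lt_u _ yu yr).
    + case: (eqVneq y u) => [yu|yu].
        by rewrite xr yu D2u D2r eq_sym eqn_add2r.
      have yr : y != r by apply/eqP => yr; rewrite xr yr eirr in exy.
      rewrite xr D2r D2o //; apply/eqP => h; move: k2R; rewrite h; move/negP; apply.
      have exr : e r y by rewrite -xr.
      by apply: map_f; rewrite mem_enum !inE yu exr /= (lt_r _ yr).
  move=> x y exy.
  case: (boolP ((x == u) || (x == r))) => hx; first exact: H.
  case: (boolP ((y == u) || (y == r))) => hy; first by rewrite eq_sym; apply: H; rewrite // esym.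
  move: hx hy; rewrite !negb_or => /andP [xu xr] /andP [yu yr].
  rewrite !D2o //; apply: P2a => //; exact: le_w.
Qed.

Fixpoint ball (T : finType) (e : rel T) (u : T) (k : nat) : {set T} :=
  if k is k'.+1 then ball e u k' :|: [set y | [exists x in ball e u k', e x y]] else [set u].

Lemma depth_exists (T : finType) (e : rel T) (u : T) :
  symmetric e -> (forall x y, connect e x y) ->
  exists h : T -> nat, forall v, v != u -> exists x, e v x && (h x < h v).
Proof.
move=> esym conn.
have Hpath : forall q, path e u q -> last u q \in ball e u (size q).
  elim/last_ind => [_|q y IH]; first by rewrite /= inE.
  rewrite rcons_path last_rcons size_rcons => /andP [pq ey] /=.
  rewrite inE; apply/orP; right; rewrite inE; apply/existsP; exists (last u q).
  by rewrite IH.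
have Hex : forall v, exists k, v \in ball e u k.
  by move=> v; case/connectP: (conn u v) => q pq ->; exists (size q); apply: Hpath.
exists (fun v => ex_minn (Hex v)) => v vu.
case: ex_minnP => d Hd Hmin.
case: d Hd Hmin => [|d] Hd Hmin.
  by move: Hd; rewrite /= inE => /eqP vu'; rewrite vu' eqxx in vu.
move: Hd; rewrite /= inE => /orP [Hd|].
  by have := Hmin d Hd; rewrite ltnn.
rewrite inE => /existsP [x /andP [xin exv]].
exists x; rewrite esym exv /=.
case: ex_minnP => dx _ Hminx.
exact: leq_ltn_trans (Hminx d xin) (ltnSn d).
Qed.

Lemma two_vertices (T : finType) (e : rel T) (a b : T) :
  symmetric e -> irreflexive e -> (forall x y, connect e x y) -> e a b ->
  (forall u w r, e u w -> e u r -> w = r) -> #|T| = 2.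
Proof.
move=> esym eirr conn eab H3.
have cl : forall q x, x \in [set a; b] -> path e x q -> last x q \in [set a; b].
  elim => //= y q IH x hx /andP [exy pq]; apply: IH pq.
  move: hx; rewrite !inE => /orP [/eqP xa|/eqP xb].
    have yb : y = b by apply: (H3 a) => //; rewrite -xa.
    by rewrite yb eqxx orbT.
  have ya : y = a by apply: (H3 b); [rewrite -xb | rewrite esym].
  by rewrite ya eqxx.
have all2 : [set a; b] = [set: T].
  apply/setP => v; rewrite in_setT; case/connectP: (conn a v) => q pq ->.
  by apply: cl => //; rewrite !inE eqxx.
have ab : a != b by apply/eqP => h; rewrite h eirr in eab.
by rewrite -cardsT -all2 cards2 ab.
Qed.

Lemma card_sum (T : finType) (P : pred T) : #|[set x | P x]| = \sum_x (P x : nat).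
Proof.
rewrite -sum1_card big_mkcond; apply: eq_bigr => x _; rewrite !inE; by case: (P x).
Qed.

Lemma card_edges (T : finType) (e : rel T) (key : T -> nat) :
  symmetric e -> irreflexive e -> injective key ->
  #|[set x : T * T | e x.1 x.2]| = 2 * \sum_v #|[set x | e v x & key x < key v]|.
Proof.
move=> esym eirr kinj.
rewrite card_sum.
rewrite -(pair_big xpredT xpredT (fun x y => (e x y : nat))) /=.
have split : forall x y, (e x y : nat) = (e x y && (key y < key x)) + (e x y && (key x < key y)).
  move=> x y; case: (boolP (e x y)) => //= exy.
  have : key x != key y.
    by apply/eqP => /kinj h; rewrite h eirr in exy.
  by case: ltngtP.
rewrite (eq_bigr (fun x => \sum_y ((e x y && (key y < key x)) : nat) + \sum_y ((e x y && (key x < key y)) : nat))); last first.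
  by move=> x _; rewrite -big_split; apply: eq_bigr => y _; rewrite split.
rewrite big_split /= [X in _ + X]exchange_big /=.
have E : forall v, #|[set x | e v x & key x < key v]| = \sum_x ((e v x && (key x < key v)) : nat).
  by move=> v; rewrite card_sum.
rewrite (eq_bigr _ (fun v _ => E v)).
rewrite [X in _ + X](eq_bigr (fun y => \sum_x ((e y x && (key x < key y)) : nat))); last first.
  by move=> y _; apply: eq_bigr => x _; rewrite esym.
by rewrite mul2n -addnn.
Qed.

Definition ordk (T : finType) (h : T -> nat) (H : nat) (v : T) : nat :=
  (H - h v) * #|T| + enum_rank v.

Lemma ordk_lt (T : finType) (h : T -> nat) H (v : T) : ordk h H v < H.+1 * #|T|.
Proof.
rewrite /ordk; have : (enum_rank v : nat) < #|T| := ltn_ord _.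
have : H - h v <= H by apply: leq_subr.
move: (H - h v) (nat_of_ord (enum_rank v)) => a b ha hb.
have := leq_mul ha (leqnn #|T|); rewrite mulSn; lia.
Qed.

Lemma ordk_inj (T : finType) (h : T -> nat) H (x y : T) : ordk h H x = ordk h H y -> x = y.
Proof.
move=> E; have := congr1 (modn^~ #|T|) E; rewrite /ordk /= !modnMDl !modn_small ?ltn_ord //.
by move/ord_inj/enum_rank_inj.
Qed.

Definition keyf (T : finType) (h : T -> nat) (H : nat) (w u r : T) (v : T) : nat :=
  if v == r then (H.+1 * #|T|).+2 else if v == u then (H.+1 * #|T|).+1
  else if v == w then H.+1 * #|T| else ordk h H v.

Lemma keyf_inj (T : finType) (h : T -> nat) H (w u r : T) :
  w != u -> u != r -> w != r -> injective (keyf h H w u r).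
Proof.
move=> wu ur wr.
have cls : forall v, (v = r /\ keyf h H w u r v = (H.+1 * #|T|).+2) \/
   (v = u /\ keyf h H w u r v = (H.+1 * #|T|).+1) \/
   (v = w /\ keyf h H w u r v = H.+1 * #|T|) \/
   (keyf h H w u r v = ordk h H v).
  move=> v; rewrite /keyf; case: (eqVneq v r) => [->|vr]; first by left.
  case: (eqVneq v u) => [->|vu]; first by right; left.
  case: (eqVneq v w) => [->|vw]; first by right; right; left.
  by right; right; right.
move=> x y.
have ox := ordk_lt h H x; have oy := ordk_lt h H y.
move: (H.+1 * #|T|) ox oy cls => N ox oy cls.
case: (cls x) => [[-> ->]|[[-> ->]|[[-> ->]|->]]];
case: (cls y) => [[-> ->]|[[-> ->]|[[-> ->]|->]]] => //;
try (move=> hh; exfalso; lia).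
all: try (by move/ordk_inj).
all: move=> hh; move: wu ur wr; rewrite ?hh ?eqxx //.
Qed.

Lemma ordk_mono (T : finType) (h : T -> nat) H (x v : T) :
  h x < h v -> h v <= H -> ordk h H v < ordk h H x.
Proof.
move=> hxv hv; rewrite /ordk.
have rv : (enum_rank v : nat) < #|T| := ltn_ord _.
have : (H - h v).+1 <= H - h x by lia.
move: (H - h v) (H - h x) (nat_of_ord (enum_rank v)) (nat_of_ord (enum_rank x)) rv => a b c d rv hab.
have := leq_mul hab (leqnn #|T|); rewrite mulSn; lia.
Qed.

Lemma cnt2 (T : finType) (v q x : T) : v != q ->
  count (fun pr : T * T => (pr.1 == x) || (pr.2 == x)) (walk_steps v [:: q; v]) =
  2 * (v == x) + 2 * (q == x).
Proof.
move=> vq; rewrite /walk_steps /=.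
case: (eqVneq v x) => [<-|vx]; first by rewrite eq_sym (negbTE vq).
by case: (q == x).
Qed.

Theorem theorem4p1 (T : finType) (e : rel T) (m : nat) (u0 : T) (s : seq T) :
  simple_graph e -> nice e -> nedges e = m ->
  is_walk e u0 s -> closed_walk u0 s -> covers_all u0 s ->
  MLW_le e (walk_length u0 s + 2 * m).
Proof.
move=> [esym eirr] [conn nK2] Hm Hw Hc Hcov.
case: (boolP [exists a, exists b, e a b]) => [/existsP [a /existsP [b eab]] | noedge]; last first.
  exists u0, [::]; split; [split => // x y exy | by []].
  exfalso; move/negP: noedge; apply; apply/existsP; exists x; apply/existsP; exists y; exact: exy.
have [u [w [r [euw eur wr]]]] : exists u w r, [/\ e u w, e u r & w != r].
  case: (boolP [exists u, exists w, exists r, [&& e u w, e u r & w != r]]) =>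
    [/existsP [u /existsP [w /existsP [r /and3P [h1 h2 h3]]]]| Hno].
    by exists u, w, r.
  exfalso; apply: nK2; split; last by exists a, b.
  apply: (two_vertices esym eirr conn eab) => x y z h1 h2; apply/eqP; apply/negPn/negP => hne.
  move/negP: Hno; apply; apply/existsP; exists x; apply/existsP; exists y; apply/existsP; exists z.
  by rewrite h1 h2 hne.
have [h hP] := depth_exists u esym conn.
pose H := \max_v h v.
have hH : forall v, h v <= H by move=> v; apply: leq_bigmax.
have wu : w != u by apply/eqP => h'; rewrite h' eirr in euw.
have ur : u != r by apply/eqP => h'; rewrite -h' eirr in eur.
pose key := keyf h H w u r.
pose N := H.+1 * #|T|.
pose p := fun v => if v == r then u else if v == u then r else if v == w then u
                   else odflt v [pick x | e v x && (h x < h v)].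
have pr : p r = u by rewrite /p eqxx.
have pu : p u = r by rewrite /p eqxx (negbTE ur).
have pw : p w = u by rewrite /p eqxx (negbTE wr) (negbTE wu).
have po : forall v, v != r -> v != u -> v != w -> e v (p v) && (h (p v) < h v).
  move=> v vr vu vw; rewrite /p (negbTE vr) (negbTE vu) (negbTE vw).
  case: pickP => [x //| none].
  have [x hx] := hP v vu; by move: (none x); rewrite hx.
have ep : forall v, e v (p v).
  move=> v; case: (eqVneq v r) => [->|vr]; first by rewrite pr esym.
  case: (eqVneq v u) => [->|vu]; first by rewrite pu.
  case: (eqVneq v w) => [->|vw]; first by rewrite pw esym.
  by case/andP: (po v vr vu vw).
have kr : key r = N.+2 by rewrite /key /keyf eqxx.
have ku : key u = N.+1 by rewrite /key /keyf eqxx (negbTE ur).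
have kw : key w = N by rewrite /key /keyf eqxx (negbTE wr) (negbTE wu).
have ko : forall v, v != r -> v != u -> v != w -> key v = ordk h H v.
  by move=> v vr vu vw; rewrite /key /keyf (negbTE vr) (negbTE vu) (negbTE vw).
have kinj : injective key by apply: keyf_inj => //; rewrite eq_sym.
have kp : forall v, v != r -> key v < key (p v).
  move=> v vr; case: (eqVneq v u) => [->|vu]; first by rewrite pu ku kr.
  case: (eqVneq v w) => [->|vw]; first by rewrite pw ku kw.
  rewrite ko //; have /andP [_ hlt] := po v vr vu vw.
  have ov : ordk h H v < N by apply: ordk_lt.
  case: (eqVneq (p v) r) => [->|pr']; first by rewrite kr ltnW // ltnW.
  case: (eqVneq (p v) u) => [->|pu']; first by rewrite ku ltnW.
  case: (eqVneq (p v) w) => [->|pw']; first by rewrite kw.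
  by rewrite ko //; apply: ordk_mono.
have kord : forall v, v != w -> v != u -> v != r -> key v < key w.
  by move=> v vw vu vr; rewrite ko // kw; apply: ordk_lt.
pose base := fun x => deg e x + count (fun pr : T * T => (pr.1 == x) || (pr.2 == x)) (walk_steps u0 s).
have [K [Kr Ksum KD]] := greedy base esym eirr kinj kp pw pu eur
   ltac:(by rewrite kw ku) ltac:(by rewrite ku kr) kord.
have [s' [ps' sz' cov' cnt']] := @insert_all T e u0 s (fun v => [:: p v; v]) K (index_enum T)
   Hcov (fun v => erefl) ltac:(by move=> v /=; rewrite ep esym ep) Hw.
exists u0, s'; split; first split.
- exact: ps'.
- move=> x y exy.
  have Deq : forall z, deg_plus e u0 s' z = Dv p base K z.
    move=> z; rewrite /deg_plus cnt' /Dv /base addnA; congr (_ + _).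
    apply: eq_bigr => v _; rewrite cnt2 //.
    by apply/eqP => vp; have := ep v; rewrite -vp eirr.
  by rewrite !Deq; apply/eqP; exact: KD.
- rewrite /walk_length sz' -Hm /nedges (card_edges esym eirr kinj) mulKn //.
  rewrite /= -big_distrl /=; move: Ksum; clear; lia.
Qed.
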